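(* Let $N$ states $i=1,\dots,N$ be observed at times $t=0,1$, with treatment version $M_i\in\{0,1,\dots,k\}$ applied at $t=1$, $A_i=\mathbb{I}(M_i>0)$, discrete covariate $X_i$, potential outcomes $Y_{it}(m)$, and (for untreated states) a potential version $M_i(1)\in\{1,\dots,k\}$. Assume consistency ($Y_{i1}=Y_{i1}(M_i)$, $Y_{i0}=Y_{i0}(0)$), the exclusion restriction (the potential outcome of an untreated state under $A=1$ is $Y_{i1}(M_i(1))$), and unit-level conditional parallel trends: for all $i$ and all $m=0,\dots,k$, $$Y_{i1}(m)=Y_{i0}+\Big[\sum_{j=1}^N\mathbb{I}(X_j=X_i,M_j=m)\Big]^{-1}\Big[\sum_{j=1}^N\mathbb{I}(X_j=X_i,M_j=m)(Y_{j1}-Y_{j0})\Big],$$ where all denominators are assumed positive. Define, for a state $i$ with $X_i=x$: if $A_i=1$, $\hat\psi_i^{DiD}=Y_{i1}-\hat Y_{i1}(0)$ with $\hat Y_{i1}(0)=Y_{i0}+[\sum_j(1-A_j)\mathbb{I}(X_j=x)]^{-1}\sum_j(1-A_j)\mathbb{I}(X_j=x)(Y_{j1}-Y_{j0})$; if $A_i=0$, $\hat\psi_i^{DiD}=\hat Y_{i1}(M_i(1))-Y_{i1}$ with $\hat Y_{i1}(M_i(1))=Y_{i0}+[\sum_jA_j\mathbb{I}(X_j=x)]^{-1}\sum_jA_j\mathbb{I}(X_j=x)(Y_{j1}-Y_{j0})$. Then for a treated state $i$, $\hat\psi_i^{DiD}=Y_{i1}(M_i)-Y_{i1}(0)$,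 and for an untreated state $i$ with $X_i=x$, $$\hat\psi_i^{DiD}=\sum_{m>0}\big(Y_{i1}(m)-Y_{i1}(0)\big)\Pr_N(M=m\mid A=1,X=x),$$ where $\Pr_N(M=m\mid A=1,X=x)=\sum_j\mathbb{I}(M_j=m,X_j=x)/\sum_jA_j\mathbb{I}(X_j=x)$.
   Context: $\Pr_N$ denotes empirical proportions over the $N$ states. *)

(* Defs.v *)
From HB Require Import structures.
From mathcomp Require Import all_boot all_order all_algebra.
Set Implicit Arguments. Unset Strict Implicit. Unset Printing Implicit Defensive.
Import Order.TTheory GRing.Theory Num.Theory.
Local Open Scope ring_scope.

Definition trt (N : nat) (M : 'I_N -> nat) (j : 'I_N) : bool := (0 < M j)%N.

Definition PrN (R : realFieldType) (T : eqType) (N : nat)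
  (X : 'I_N -> T) (M : 'I_N -> nat) (m : nat) (x : T) : R :=
  (\sum_(j < N) ((M j == m) && (X j == x))%:R)
  / (\sum_(j < N) (trt M j && (X j == x))%:R).

Definition psi_did (R : realFieldType) (T : eqType) (N : nat)
  (X : 'I_N -> T) (M : 'I_N -> nat) (Y0 Y1 : 'I_N -> R) (i : 'I_N) : R :=
  if trt M i then
    Y1 i - (Y0 i
      + (\sum_(j < N) (~~ trt M j && (X j == X i))%:R * (Y1 j - Y0 j))
        / (\sum_(j < N) (~~ trt M j && (X j == X i))%:R))
  else
    (Y0 i
      + (\sum_(j < N) (trt M j && (X j == X i))%:R * (Y1 j - Y0 j))
        / (\sum_(j < N) (trt M j && (X j == X i))%:R)) - Y1 i.

(* Main.v *)
Require Import Defs.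
From mathcomp Require Import all_boot all_order all_algebra.
Import Order.TTheory GRing.Theory Num.Theory.
From mathcomp Require Import ring.
Local Open Scope ring_scope.
Local Open Scope ring_scope.
Lemma key (R : realFieldType) (k n : nat) (b : bool) (c : R) :
  (n <= k)%N ->
  \sum_(1 <= m < k.+1) ((n == m) && b)%:R * c = ((0 < n)%N && b)%:R * c.
Proof.
move=> hn.
case: b; last first.
  rewrite andbF mul0r; apply: big1 => m _; by rewrite andbF mul0r.
rewrite andbT; under eq_bigr do rewrite andbT.
case: n hn => [|n] hn.
  rewrite /= mul0r; apply: big1_seq => m /andP[_]; rewrite mem_iota => /andP[h1 _].
  by case: m h1 => [//|m _]; rewrite mul0r.
rewrite (big_cat_nat _ (n := n.+1)) //=; last by rewrite ltnS ltnW.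
rewrite [X in _ + X]big_ltn ?ltnS // eqxx /= mul1r.
rewrite [X in c + X]big1_seq ?addr0; last first.
  move=> m /andP[_]; rewrite mem_iota => /andP[h1 _].
  by rewrite (_ : (n.+1 == m) = false) ?mul0r //; apply/negbTE; rewrite neq_ltn h1.
rewrite big1_seq ?add0r //.
move=> m /andP[_]; rewrite mem_iota => /andP[_ h2].
rewrite (_ : (n.+1 == m) = false) ?mul0r //; apply/negbTE.
by rewrite neq_ltn; rewrite subnKC // in h2; rewrite h2 orbT.
Qed.

Theorem proposition4 (R : realFieldType) (T : eqType) (N k : nat)
  (X : 'I_N -> T)                 (* discrete covariate *)
  (M : 'I_N -> nat)               (* treatment version in {0,..,k} *)
  (Y0 Y1 : 'I_N -> R)             (* observed outcomes at t = 0, 1 *)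
  (Y1pot : 'I_N -> nat -> R)      (* potential outcomes Y_{i1}(m) *)
  (Y0pot : 'I_N -> nat -> R)      (* potential outcomes Y_{i0}(m) *)
  (M1 : 'I_N -> nat)              (* potential version M_i(1) *)
  (Y1A : 'I_N -> R)               (* potential outcome Y_{i1}(A = 1) of untreated states *)
  (hM : forall i, (M i <= k)%N)
  (hM1 : forall i, ~~ trt M i -> (1 <= M1 i <= k)%N)
  (hcons1 : forall i, Y1 i = Y1pot i (M i))
  (hcons0 : forall i, Y0 i = Y0pot i 0%N)
  (hexcl : forall i, ~~ trt M i -> Y1A i = Y1pot i (M1 i))
  (hpos : forall i (m : nat), (m <= k)%N ->
     0 < \sum_(j < N) ((X j == X i) && (M j == m))%:R :> R)
  (hposA : forall i, 0 < \sum_(j < N) (trt M j && (X j == X i))%:R :> R)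
  (hpos0 : forall i, 0 < \sum_(j < N) (~~ trt M j && (X j == X i))%:R :> R)
  (hpt : forall i (m : nat), (m <= k)%N ->
     Y1pot i m = Y0 i
       + (\sum_(j < N) ((X j == X i) && (M j == m))%:R)^-1
         * (\sum_(j < N) ((X j == X i) && (M j == m))%:R * (Y1 j - Y0 j))) :
  (forall i, trt M i -> psi_did X M Y0 Y1 i = Y1pot i (M i) - Y1pot i 0%N)
  /\
  (forall i (x : T), ~~ trt M i -> X i = x ->
     psi_did X M Y0 Y1 i
     = \sum_(1 <= m < k.+1) (Y1pot i m - Y1pot i 0%N) * PrN R X M m x).
Proof.
have eq0 : forall i j, (~~ trt M j && (X j == X i)) = ((X j == X i) && (M j == 0%N)).
  by move=> i j; rewrite /trt lt0n negbK andbC.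
split.
  move=> i hi; rewrite /psi_did hi -hcons1 (hpt i 0%N) //.
  under eq_bigr do rewrite eq0.
  under [X in _ / X]eq_bigr do rewrite eq0.
  by rewrite mulrC.
move=> i x hi hx; rewrite /psi_did (negbTE hi).
have hMi : M i = 0%N by move: hi; rewrite /trt lt0n negbK => /eqP.
have Y1i : Y1 i = Y1pot i 0%N by rewrite hcons1 hMi.
rewrite -Y1i /PrN -hx.
set CA := \sum_(j < N) (trt M j && (X j == X i))%:R.
have hCA : CA != 0 by rewrite gt_eqF ?hposA.
rewrite (eq_big_nat _ _ (F2 := fun m =>
   ((Y0 i - Y1 i) * \sum_(j < N) ((M j == m) && (X j == X i))%:R
    + \sum_(j < N) ((M j == m) && (X j == X i))%:R * (Y1 j - Y0 j)) / CA)); last first.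
  move=> m /andP[_ hm]; rewrite ltnS in hm.
  have hC := hpos i m hm.
  set C := \sum_(j < N) ((X j == X i) && (M j == m))%:R in hC.
  have eC : \sum_(j < N) ((M j == m) && (X j == X i))%:R = C by apply: eq_bigr => j _; rewrite andbC.
  have eS : \sum_(j < N) ((M j == m) && (X j == X i))%:R * (Y1 j - Y0 j) = C * (Y1pot i m - Y0 i).
    rewrite (hpt i m hm) -/C addrC addKr mulrA mulfV ?mul1r ?gt_eqF //.
    by apply: eq_bigr => j _; rewrite andbC.
  by rewrite eC eS; field.
rewrite /= -mulr_suml big_split /= -mulr_sumr.
have e1 : \sum_(1 <= m < k.+1) \sum_(j < N) ((M j == m) && (X j == X i))%:R = CA.
  rewrite exchange_big /=; apply: eq_bigr => j _.
  have := @key R k (M j) (X j == X i) 1 (hM j).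
  rewrite mulr1 => <-; by apply: eq_bigr => m _; rewrite mulr1.
have e2 : \sum_(1 <= m < k.+1) \sum_(j < N) ((M j == m) && (X j == X i))%:R * (Y1 j - Y0 j)
   = \sum_(j < N) (trt M j && (X j == X i))%:R * (Y1 j - Y0 j).
  rewrite exchange_big /=; apply: eq_bigr => j _.
  exact: key.
by rewrite e1 e2; field.
Qed.
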